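(* Let $M=(E,\Delta)$ be a matroid of rank $r$ and let $M\times e$ denote its free coextension by a new element $e\notin E$. Then $$(-1)^{r+1}\chi_{M\times e}(-q)=(1+q)\,f_M(q).$$
   Context: For a matroid $M=(E,\Delta)$ of rank $r$ with rank function $\mathrm{rk}$: - The characteristic polynomial is $\chi_M(q)=\sum_{A\subseteq E}(-1)^{|A|}q^{r-\mathrm{rk}(A)}$. - The $f$-polynomial is $f_M(q)=\sum_{A\in\Delta}q^{r-|A|}=\sum_{i=0}^r f_iq^{r-i}$, where $f_i$ is the number of independent sets of size $i$. - The free extension of $M$ by $e\notin E$ is the matroid $M+e$ on $E\cup\{e\}$ whose independent sets are $\Delta\cup\{I\cup\{e\}: I\in\Delta,\ |I|\le r-1\}$. - The dual matroid $M^*$ on $E$ has as independent sets those $A\subseteq E$ with $\mathrm{rk}(E\setminus A)=r$. - The free coextension is $M\times e:=(M^*+e)^*$; it has rank $r+1$. *)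

(* Defs.v *)
From HB Require Import structures.
From mathcomp Require Import all_boot all_order all_algebra.
Set Implicit Arguments. Unset Strict Implicit. Unset Printing Implicit Defensive.
Import Order.TTheory GRing.Theory Num.Theory.

Section Matroids.
Variable T : finType.

Definition is_matroid (D : {set {set T}}) : bool :=
  [&& set0 \in D,
      [forall A in D, forall B : {set T}, (B \subset A) ==> (B \in D)] &
      [forall A in D, forall B in D,
         (#|A| < #|B|)%N ==> [exists x in B :\: A, x |: A \in D]]].

Definition mrank (D : {set {set T}}) (A : {set T}) : nat :=
  \max_(I in D | I \subset A) #|I|.

Definition mrk (D : {set {set T}}) : nat := mrank D [set: T].

Definition mdual (D : {set {set T}}) : {set {set T}} :=
  [set A | mrank D (~: A) == mrk D].

(* free extension by a new element e, modelled as None on the ground type option T *)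
Definition free_ext (D : {set {set T}}) : {set {set option T}} :=
  [set X : {set option T} |
     ([set x | Some x \in X] \in D) &&
     ((None \in X) ==> (#|[set x | Some x \in X]| < mrk D)%N)].

Definition charpoly (D : {set {set T}}) : {poly int} :=
  \sum_(A : {set T}) ((-1) ^+ #|A|) *: 'X^(mrk D - mrank D A).

Definition fpoly (D : {set {set T}}) : {poly int} :=
  \sum_(A in D) 'X^(mrk D - #|A|).

End Matroids.

Definition free_coext (T : finType) (D : {set {set T}}) : {set {set option T}} :=
  mdual (free_ext (mdual D)).

(* Main.v *)
Require Import Defs.
From HB Require Import structures.
From mathcomp Require Import all_boot all_order all_algebra.
From mathcomp Require Import zify ring.
Import Order.TTheory GRing.Theory Num.Theory.
Set Implicit Arguments. Unset Strict Implicit. Unset Printing Implicit Defensive.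

Section Gen.
Variable U : finType.
Implicit Types (D : {set {set U}}) (A B I : {set U}).

Lemma mrank_ge D A I : I \in D -> I \subset A -> #|I| <= mrank D A.
Proof. by move=> ID IA; rewrite /mrank; apply: (leq_bigmax_cond I); rewrite ID IA. Qed.

Lemma mrank_le D A k : (forall I, I \in D -> I \subset A -> #|I| <= k) -> mrank D A <= k.
Proof. by move=> H; apply/bigmax_leqP => I /andP[]; exact: H. Qed.

Lemma mrank_wit D A : set0 \in D ->
  exists I, [/\ I \in D, I \subset A & #|I| = mrank D A].
Proof.
move=> D0.
have P0 : (set0 \in D) && (set0 \subset A) by rewrite D0 sub0set.
case: (@arg_maxnP _ set0 (fun I => (I \in D) && (I \subset A)) (fun I => #|I|) P0) => I /andP[ID IA] Hmax.
exists I; split => //; apply/eqP; rewrite eqn_leq mrank_ge //=.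
by apply: mrank_le => J JD JA; apply: Hmax; rewrite JD JA.
Qed.

Lemma mrank_card D A : mrank D A <= #|A|.
Proof. by apply: mrank_le => I _ IA; exact: subset_leq_card. Qed.

Lemma mrank_mono D A B : A \subset B -> mrank D A <= mrank D B.
Proof. by move=> AB; apply: mrank_le => I ID IA; apply: mrank_ge => //; exact: subset_trans AB. Qed.

Lemma mrank_indep D A : A \in D -> mrank D A = #|A|.
Proof. by move=> AD; apply/eqP; rewrite eqn_leq mrank_card mrank_ge. Qed.

Lemma mrank_eq_indep D A : set0 \in D -> mrank D A = #|A| -> A \in D.
Proof.
move=> D0 H; case: (mrank_wit A D0) => I [ID IA HI].
suff -> : A = I by exact: ID.
apply/eqP; rewrite eq_sym eqEcard IA HI H; exact: leqnn.
Qed.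

Lemma mrank_mrk D A : mrank D A <= mrk D.
Proof. by apply: mrank_mono; exact: subsetT. Qed.

Lemma mdual0 D : set0 \in mdual D.
Proof. by rewrite inE setC0 eqxx. Qed.

End Gen.

Section Mat.
Variable T : finType.
Variable D : {set {set T}}.
Hypothesis hD : is_matroid D.
Implicit Types (A B C I : {set T}).

Lemma m0 : set0 \in D.
Proof. by case/and3P: hD. Qed.

Lemma msub A B : A \in D -> B \subset A -> B \in D.
Proof.
case/and3P: hD => _ /forallP H _ AD BA.
by move/implyP: (H A) => /(_ AD) /forallP /(_ B) /implyP; apply.
Qed.

Lemma maug A B : A \in D -> B \in D -> #|A| < #|B| ->
  exists2 x, x \in B :\: A & x |: A \in D.
Proof.
case/and3P: hD => _ _ /forallP H AD BD lt.
move/implyP: (H A) => /(_ AD) /forallP /(_ B) /implyP /(_ BD) /implyP /(_ lt).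
by case/existsP => x /andP[]; exists x.
Qed.

Lemma mextend I A : I \in D -> I \subset A ->
  exists J, [/\ J \in D, I \subset J, J \subset A & #|J| = mrank D A].
Proof.
move=> ID IA.
have P0 : [&& I \in D, I \subset I & I \subset A] by rewrite ID subxx IA.
case: (@arg_maxnP _ I (fun J => [&& J \in D, I \subset J & J \subset A]) (fun J => #|J|) P0) => J /and3P[JD IJ JA] Hmax.
exists J; split => //; apply/eqP; rewrite eqn_leq mrank_ge //=.
rewrite leqNgt; apply/negP => lt.
case: (mrank_wit A m0) => K [KD KA HK].
rewrite -HK in lt.
case: (maug JD KD lt) => x /setDP[xK xJ] xJD.
have IxJ : I \subset x |: J by apply: (subset_trans IJ); exact: subsetUr.
have xJA : x |: J \subset A by rewrite subUset sub1set (subsetP KA) // JA.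
have := Hmax (x |: J); rewrite xJD IxJ xJA => /(_ isT).
by rewrite cardsU1 xJ /= ltnn.
Qed.

Lemma mbasis : exists B, B \in D /\ #|B| = mrk D.
Proof.
by case: (mextend m0 (sub0set [set: T])) => B [BD _ _ HB]; exists B.
Qed.

Lemma mbasis_of I : I \in D -> exists B, [/\ B \in D, I \subset B & #|B| = mrk D].
Proof. by move=> ID; case: (mextend ID (subsetT I)) => B [BD IB _ HB]; exists B. Qed.

Lemma dual_card C : C \in mdual D -> #|C| + mrk D <= #|T|.
Proof.
rewrite inE => /eqP H.
have := mrank_card D (~: C); rewrite H.
by have := cardsC C; lia.
Qed.

Lemma mrk_dual : mrk (mdual D) = #|T| - mrk D.
Proof.
apply/eqP; rewrite eqn_leq; apply/andP; split.
  apply: mrank_le => C CD _; have := dual_card CD; lia.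
case: mbasis => B [BD HB].
have : ~: B \in mdual D by rewrite inE setCK mrank_indep // HB.
move/(mrank_ge)/(_ (subsetT _)).
by have := cardsC B; rewrite HB /mrk; lia.
Qed.
End Mat.
Section Opt.
Variable T : finType.
Implicit Types (A B C P : {set T}) (X Y : {set option T}).
Local Notation proj X := [set x | Some x \in X].

Lemma projK A : proj (Some @: A) = A.
Proof. by apply/setP => x; rewrite inE mem_imset //; exact: Some_inj. Qed.

Lemma NnotS A : None \notin Some @: A.
Proof. by apply/imsetP => -[x _]. Qed.

Lemma projU A : proj (None |: Some @: A) = A.
Proof. by apply/setP => x; rewrite inE in_setU1 /= mem_imset //; exact: Some_inj. Qed.

Lemma card_sm A : #|Some @: A| = #|A|.
Proof. by rewrite card_imset //; exact: Some_inj. Qed.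

Lemma decompN X : None \notin X -> X = Some @: proj X.
Proof.
move=> h; apply/setP => -[x|]; first by rewrite mem_imset ?inE //; exact: Some_inj.
by rewrite (negbTE h) (negbTE (NnotS _)).
Qed.

Lemma decompY X : None \in X -> X = None |: Some @: proj X.
Proof.
move=> h; apply/setP => -[x|]; last by rewrite h in_setU1 eqxx.
by rewrite in_setU1 /= mem_imset ?inE //; exact: Some_inj.
Qed.

Lemma cardX X : #|X| = #|proj X| + (None \in X).
Proof.
case: (boolP (None \in X)) => h.
  by rewrite {1}(decompY h) cardsU1 NnotS card_sm addn1.
by rewrite {1}(decompN h) card_sm addn0.
Qed.

Lemma compl_sm A : ~: (Some @: A) = None |: Some @: (~: A).
Proof.
apply/setP => -[x|]; last by rewrite in_setC in_setU1 eqxx (negbTE (NnotS _)).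
rewrite in_setC in_setU1 /= !mem_imset ?inE //; exact: Some_inj.
Qed.

Lemma compl_smN A : ~: (None |: Some @: A) = Some @: (~: A).
Proof. by rewrite -[RHS]setCK compl_sm setCK. Qed.

Lemma proj_sub X Y : X \subset Y -> proj X \subset proj Y.
Proof. by move=> XY; apply/subsetP => x; rewrite !inE => /(subsetP XY). Qed.

Lemma sm_sub A B : A \subset B -> Some @: A \subset Some @: B.
Proof. exact: imsetS. Qed.
End Opt.
Section Coext.
Variable T : finType.
Variable D : {set {set T}}.
Hypothesis hD : is_matroid D.
Implicit Types (A B C P J : {set T}) (X Y : {set option T}).
Local Notation proj X := [set x | Some x \in X].
Local Notation Ds := (mdual D).
Local Notation F := (free_ext Ds).
Local Notation N := (mdual F).
Local Notation r := (mrk D).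
Local Notation s := (mrk Ds).

Lemma freeE X : (X \in F) = (proj X \in Ds) && ((None \in X) ==> (#|proj X| < s)).
Proof. by rewrite inE. Qed.

Lemma F0 : set0 \in F.
Proof.
rewrite freeE in_set0 /= andbT.
have -> : proj set0 = set0 :> {set T} by apply/setP => x; rewrite !inE.
exact: mdual0.
Qed.

Lemma F_le X : X \in F -> #|X| <= s.
Proof.
rewrite freeE => /andP[PD H]; rewrite cardX.
have := mrank_ge PD (subsetT _); rewrite -/(mrk _).
by case: (None \in X) H => /= H; lia.
Qed.

Lemma mrkF : mrk F = s.
Proof.
apply/eqP; rewrite eqn_leq; apply/andP; split.
  by apply: mrank_le => X XF _; exact: F_le.
case: (mrank_wit [set: T] (mdual0 D)) => C [CD _ HC].
have : Some @: C \in F by rewrite freeE projK CD (negbTE (NnotS _)).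
by move/mrank_ge/(_ (subsetT _)); rewrite card_sm HC.
Qed.

Lemma mrankF_sm B : mrank F (Some @: B) = mrank Ds B.
Proof.
apply/eqP; rewrite eqn_leq; apply/andP; split.
  apply: mrank_le => X XF XB.
  have hN : None \notin X by apply/negP => /(subsetP XB); rewrite (negbTE (NnotS _)).
  move: XF; rewrite freeE => /andP[PD _].
  rewrite cardX (negbTE hN) addn0; apply: mrank_ge => //.
  by have := proj_sub XB; rewrite projK.
case: (mrank_wit B (mdual0 D)) => C [CD CB HC].
have : Some @: C \in F by rewrite freeE projK CD (negbTE (NnotS _)).
by move/mrank_ge/(_ (sm_sub CB)); rewrite card_sm HC.
Qed.

Lemma NinN A : (None |: Some @: A \in N) = (A \in D).
Proof.
rewrite inE compl_smN mrankF_sm mrkF.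
apply/idP/idP.
  move/eqP => H; case: (mrank_wit (~: A) (mdual0 D)) => C [CD CA HC].
  have hC := CD; rewrite inE in hC; move/eqP: hC => hC.
  have cC : #|~: C| = r.
    have := cardsC C; rewrite HC H mrk_dual //.
    have := dual_card hD CD; rewrite HC H mrk_dual //; lia.
  have : ~: C \in D by apply: mrank_eq_indep; [exact: (m0 hD) | rewrite hC cC].
  move/(msub hD); apply => //; by rewrite subsetC.
move=> AD; case: (mbasis_of hD AD) => J [JD AJ HJ].
have CD : ~: J \in Ds by rewrite inE setCK mrank_indep // HJ.
rewrite eqn_leq mrank_mrk /=.
have := mrank_ge CD (_ : ~: J \subset ~: A); rewrite mrk_dual //.
by have := cardsC J; rewrite HJ => h1 ; rewrite setCS => /(_ AJ); lia.
Qed.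

Lemma SinN A C : C \in Ds -> C \subset ~: A -> s <= #|C| + 1 -> Some @: A \in N.
Proof.
move=> CD CA Hs; rewrite inE compl_sm eqn_leq mrank_mrk /= mrkF.
case: (ltnP #|C| s) => hCs.
  have XF : None |: Some @: C \in F by rewrite freeE projU CD in_setU1 eqxx.
  have := mrank_ge XF (setUS _ (sm_sub CA)).
  by rewrite cardsU1 (NnotS _) card_sm /= => h; apply: (leq_trans _ h); lia.
have XF : Some @: C \in F by rewrite freeE projK CD (negbTE (NnotS _)).
have := mrank_ge XF (subset_trans (sm_sub CA) (subsetUr [set None] _)).
by rewrite card_sm => h; exact: (leq_trans hCs h).
Qed.

Lemma SinN_card A : Some @: A \in N -> #|A| <= r + 1.
Proof.
rewrite inE compl_sm mrkF => /eqP H.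
case: (mrank_wit (None |: Some @: ~: A) F0) => X [XF XA HX].
move: (XF); rewrite freeE => /andP[PD _].
have PA : proj X \subset ~: A by have := proj_sub XA; rewrite projU.
have := dual_card hD PD; have := cardX X; rewrite HX H mrk_dual //.
have := subset_leq_card PA; have := cardsC A; have := mrank_mrk D [set: T].
rewrite -/(mrk D); set n := #|T|; set p := #|proj X|; case: (None \in X) => /=; lia.
Qed.

Lemma extN A x : A \in D -> Some @: (x |: A) \in N.
Proof.
move=> AD; case: (mbasis_of hD AD) => J [JD AJ HJ].
apply: (@SinN _ (~: (x |: J))).
- rewrite inE setCK eqn_leq mrank_mrk /=.
  by rewrite -HJ -(mrank_indep JD); apply: mrank_mono; exact: subsetUr.
- by rewrite setCS; exact: setUS.
- rewrite mrk_dual //; have := cardsC (x |: J); have := cardsU1 x J.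
  by rewrite HJ; case: (x \in J) => /=; lia.
Qed.

Lemma indN A : A \in D -> Some @: A \in N.
Proof.
move=> AD; case: (mbasis_of hD AD) => J [JD AJ HJ].
apply: (@SinN _ (~: J)).
- by rewrite inE setCK mrank_indep // HJ.
- by rewrite setCS.
- by rewrite mrk_dual //; have := cardsC J; rewrite HJ; lia.
Qed.

Local Notation rN := (mrank N).

Lemma R1 A : A \in D -> rN (Some @: A) = #|A|.
Proof. by move=> AD; rewrite mrank_indep ?card_sm // indN. Qed.

Lemma R2 A : A \in D -> rN (None |: Some @: A) = #|A| + 1.
Proof. by move=> AD; rewrite mrank_indep ?NinN // cardsU1 NnotS card_sm addn1. Qed.

Lemma R3 A : A \notin D -> rN (None |: Some @: A) = rN (Some @: A).
Proof.
move=> AnD; apply/eqP; rewrite eqn_leq; apply/andP; split; last first.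
  exact: mrank_mono (subsetUr [set None] _).
apply: mrank_le => X XN XA.
have PA : proj X \subset A by have := proj_sub XA; rewrite projU.
case: (boolP (None \in X)) => hX; last first.
  apply: mrank_ge => //; rewrite (decompN hX); exact: sm_sub.
move: XN; rewrite (decompY hX) NinN => PD.
have : ~~ (A \subset proj X).
  apply/negP => AP; move: AnD; suff -> : A = proj X by rewrite PD.
  by apply/eqP; rewrite eqEsubset AP.
case/subsetPn => x xA xP.
have := mrank_ge (extN x PD) (sm_sub (_ : x |: proj X \subset A)).
rewrite card_sm cardsU1 xP cardsU1 NnotS card_sm addnC; apply.
by rewrite subUset sub1set xA PA.
Qed.

Lemma R4 : mrk N = r + 1.
Proof.
apply/eqP; rewrite eqn_leq; apply/andP; split.
  apply: mrank_le => X XN _; case: (boolP (None \in X)) => hX.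
    move: XN; rewrite (decompY hX) NinN => PD.
    rewrite cardsU1 NnotS card_sm addnC leq_add2r.
    by have := mrank_ge PD (subsetT _).
  by move: XN; rewrite (decompN hX) card_sm => /SinN_card.
case: (mbasis hD) => B [BD HB].
have := mrank_ge (_ : None |: Some @: B \in N) (subsetT _).
by rewrite cardsU1 NnotS card_sm HB addnC; apply; rewrite NinN.
Qed.
End Coext.

Local Open Scope ring_scope.

Lemma sign_sq (a : nat) : (-1 : {poly int}) ^+ a * (-1) ^+ a = 1.
Proof. by rewrite -exprMn mulrNN mulr1 expr1n. Qed.

Lemma term_eq (a k : nat) :
  (-1 : int) ^+ (a + 1) *: ('X^k : {poly int}) + (-1) ^+ a *: 'X^(k.+1)
  = (-1) ^+ a *: (('X - 1) * 'X^k).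
Proof.
rewrite exprD expr1 mulrN1 scaleNr exprSr mulrBl mul1r scalerBr addrC.
by rewrite mulrC.
Qed.

Lemma charpolyE (T : finType) (D : {set {set T}}) (hD : is_matroid D) :
  charpoly (free_coext D) =
  \sum_(A in D) (-1) ^+ #|A| *: (('X - 1) * 'X^(mrk D - #|A|)).
Proof.
rewrite /charpoly /free_coext (bigID (fun X : {set option T} => None \in X)) /=.
rewrite (reindex_onto (fun A : {set T} => None |: Some @: A) (fun X : {set option T} => [set x | Some x \in X])) /=;
  last by move=> X hX; rewrite -decompY.
rewrite (eq_bigl xpredT); last by move=> A; rewrite projU in_setU1 eqxx eqxx.
rewrite (reindex_onto (fun A : {set T} => Some @: A) (fun X : {set option T} => [set x | Some x \in X])) /=;
  last by move=> X hX; rewrite -decompN.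
rewrite [X in _ + X](eq_bigl xpredT); last by move=> A; rewrite projK (NnotS A) eqxx.
rewrite -big_split /= (bigID (fun A => A \in D)) /=.
rewrite [X in _ + X]big1 ?addr0; last first.
  move=> A AnD; rewrite R3 //.
  by rewrite cardsU1 NnotS card_sm add1n exprS mulN1r scaleNr addNr.
apply: eq_bigr => A AD.
rewrite R1 // R2 // R4 // cardsU1 NnotS card_sm add1n -term_eq addn1.
have Ar : (#|A| <= mrk D)%N by have := mrank_ge AD (subsetT A).
by rewrite !addn1 subSS subSn.
Qed.

Theorem mainTheorem3 (T : finType) (D : {set {set T}}) (hD : is_matroid D) :
  (-1) ^+ (mrk D).+1 *: (charpoly (free_coext D) \Po (- 'X)) = (1 + 'X) * fpoly D.
Proof.
rewrite charpolyE // raddf_sum scaler_sumr /fpoly mulr_sumr; apply: eq_bigr => A AD.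
have Ar : (#|A| <= mrk D)%N by have := mrank_ge AD (subsetT A).
have [k rE] : exists k, mrk D = (#|A| + k)%N by exists (mrk D - #|A|)%N; rewrite subnKC.
rewrite rE addKn.
rewrite /= comp_polyZ comp_polyM comp_polyB comp_polyX comp_Xn_poly (comp_poly_multiplicative _).2.
rewrite -!mul_polyC !rmorphXn /= !rmorphN /= !polyC1 (exprNn 'X k).
rewrite exprS exprD.
set u := (-1 : {poly int}) ^+ #|A|; set v := (-1 : {poly int}) ^+ k.
have uu : u * u = 1 by exact: sign_sq.
have vv : v * v = 1 by exact: sign_sq.
have -> : -1 * (u * v) * (u * ((- 'X - 1) * (v * 'X^k))) = (u * u) * (v * v) * ((1 + 'X) * 'X^k).
  by ring.
by rewrite uu vv !mul1r.
Qed.
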